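(* Consider the $M/G/\infty$ queueing system: customers arrive according to a Poisson process of rate $\lambda>0$, there are infinitely many servers (so every arriving customer immediately starts service), and service times are i.i.d. with continuous distribution function $B(x)$, independent of the arrival process. Let $\overline{B}(x)=1-B(x)$ and assume $b=\int_0^\infty \overline{B}(x)\,dx<\infty$; put $\rho=\lambda b$ and $\rho(t)=\lambda\int_0^t \overline{B}(x)\,dx$. Let $Q(t)$ be the number of customers in the system at time $t$, with $P(Q(0)=0)=1$, let $P_k(t)=P(Q(t)=k)$ and $P_k=\frac{\rho^k}{k!}e^{-\rho}$ for $k\ge 0$, and let $\varphi(t)=\sup_{k\ge 0}|P_k(t)-P_k|$. Then for all $t\ge 0$, $$\varphi(t)\le C_\rho\,(\rho-\rho(t)) = C_\rho\,\lambda\int_t^\infty \overline{B}(x)\,dx,\qquad\text{where } C_\rho=2\,\frac{\rho^{[\rho]}}{[\rho]!},$$ and $[\rho]$ denotes the integer part of $\rho$.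
   Context: It is known (and may be used) that $P_k(t)=\frac{(\rho(t))^k}{k!}e^{-\rho(t)}$ for $k\ge 0$, so $P_k=\lim_{t\to\infty}P_k(t)$ is the stationary distribution of $Q(t)$. *)

(* Defs.v *)
From Stdlib Require Import Reals.
From Coquelicot Require Import Coquelicot.
Open Scope R_scope.

Definition poisson_pmf (r : R) (k : nat) : R :=
  r ^ k / INR (Factorial.fact k) * exp (- r).

Definition rho_t (lam : R) (B : R -> R) (t : R) : R :=
  lam * RInt (fun x => 1 - B x) 0 t.

(* P_k(t) = P(Q(t) = k) for the M/G/infinity queue started empty:
   by the known result quoted in the context, Q(t) ~ Poisson(rho(t)). *)
Definition MGinf_Pk (lam : R) (B : R -> R) (t : R) (k : nat) : R :=
  poisson_pmf (rho_t lam B t) k.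

(* integer part [x] as a natural number (x >= 0 in use) *)
Definition int_part_nat (x : R) : nat := Z.to_nat (Int_part x).

Definition C_rho (rho : R) : R :=
  2 * (rho ^ int_part_nat rho / INR (Factorial.fact (int_part_nat rho))).

(* Main.v *)
Require Import Defs.
From Stdlib Require Import Reals Lra Lia ZArith.
From Coquelicot Require Import Coquelicot.
Open Scope R_scope.

Lemma pmf_nonneg r k : 0 <= r -> 0 <= poisson_pmf r k.
Proof.
  intros Hr. unfold poisson_pmf.
  apply Rmult_le_pos; [|left; apply exp_pos].
  apply Rmult_le_pos; [apply pow_le; lra|].
  left; apply Rinv_0_lt_compat, lt_0_INR, Factorial.lt_O_fact.
Qed.

Lemma pmf_le1 r k : 0 <= r -> poisson_pmf r k <= 1.
Proof.
  intros Hr. unfold poisson_pmf.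
  assert (H : r ^ k / INR (Factorial.fact k) <= exp r).
  { eapply Rle_trans; [|apply (exp_ge_taylor r k Hr)].
    destruct k as [|m].
    - simpl. lra.
    - rewrite tech5.
      assert (0 <= sum_f_R0 (fun k : nat => r ^ k / INR (Factorial.fact k)) m).
      { apply cond_pos_sum. intros n. apply Rmult_le_pos; [apply pow_le; lra|].
        left; apply Rinv_0_lt_compat, lt_0_INR, Factorial.lt_O_fact. }
      lra. }
  assert (Hp : 0 < exp (- r)) by apply exp_pos.
  apply Rmult_le_compat_r with (r := exp (-r)) in H; [|lra].
  rewrite <- exp_plus in H. replace (r + - r) with 0 in H by ring.
  rewrite exp_0 in H. exact H.
Qed.

Definition dpmf (k : nat) (r : R) : R :=
  match k with
  | O => - exp (- r)
  | S m => poisson_pmf r m - poisson_pmf r (S m)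
  end.

Lemma pmf_derive k r : is_derive (fun x => poisson_pmf x k) r (dpmf k r).
Proof.
  unfold poisson_pmf, dpmf. destruct k as [|m].
  - simpl. auto_derive; auto. field.
  - unfold poisson_pmf.
    rewrite fact_simpl, mult_INR.
    set (c := INR (Factorial.fact m)).
    assert (0 < c) by apply lt_0_INR, Factorial.lt_O_fact.
    auto_derive; auto.
    replace (match m with 0%nat => 1 | S _ => INR m + 1 end) with (INR (S m)) by reflexivity.
    assert (0 < INR (S m)) by (apply lt_0_INR; lia).
    simpl pow. field. lra.
Qed.

Lemma dpmf_bound k r : 0 <= r -> Rabs (dpmf k r) <= 1.
Proof.
  intros Hr. destruct k as [|m]; simpl.
  - rewrite Rabs_Ropp, Rabs_pos_eq by (left; apply exp_pos).
    rewrite <- exp_0. destruct (Req_dec r 0). subst; rewrite Ropp_0; lra.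
    left; apply exp_increasing; lra.
  - pose proof (pmf_nonneg r m Hr). pose proof (pmf_nonneg r (S m) Hr).
    pose proof (pmf_le1 r m Hr). pose proof (pmf_le1 r (S m) Hr).
    apply Rabs_le; lra.
Qed.

Lemma pmf_lip k x y : 0 <= x -> x <= y ->
  Rabs (poisson_pmf x k - poisson_pmf y k) <= y - x.
Proof.
  intros Hx Hxy.
  destruct (MVT_gen (fun r => poisson_pmf r k) x y (dpmf k)) as [c [Hc Heq]].
  - intros; apply pmf_derive.
  - intros z _. apply continuity_pt_filterlim.
    apply (ex_derive_continuous (fun r => poisson_pmf r k)).
    eexists; apply pmf_derive.
  - rewrite Rmin_left, Rmax_right in Hc by lra.
    rewrite Rabs_minus_sym, Heq, Rabs_mult, (Rabs_pos_eq (y - x)) by lra.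
    rewrite <- (Rmult_1_l (y - x)) at 2.
    apply Rmult_le_compat_r; [lra|]. apply dpmf_bound; lra.
Qed.

Lemma pow_fact_ge r n : INR n <= r -> INR (Factorial.fact n) <= r ^ n.
Proof.
  induction n as [|n IH]; intros H.
  - simpl; lra.
  - change (Factorial.fact (S n)) with (S n * Factorial.fact n)%nat.
    rewrite mult_INR, <- tech_pow_Rmult.
    pose proof (pos_INR n). pose proof (S_INR n).
    apply Rmult_le_compat; try lra. apply pos_INR.
Qed.

Lemma C_ge1 r : 0 <= r -> 1 <= C_rho r.
Proof.
  intros Hr. unfold C_rho, int_part_nat.
  set (n := Z.to_nat (Int_part r)).
  assert (Hn : INR n <= r).
  { unfold n. destruct (Z_lt_le_dec (Int_part r) 0) as [Hz|Hz].
    - replace (Z.to_nat (Int_part r)) with 0%nat by (destruct (Int_part r); simpl; lia). simpl; lra.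
    - rewrite INR_IZR_INZ, Z2Nat.id by lia. apply base_Int_part. }
  pose proof (pow_fact_ge r n Hn).
  assert (0 < INR (Factorial.fact n)) by apply lt_0_INR, Factorial.lt_O_fact.
  assert (1 <= r ^ n / INR (Factorial.fact n)).
  { apply (Rmult_le_reg_r (INR (Factorial.fact n))); auto.
    unfold Rdiv; rewrite Rmult_assoc, Rinv_l by lra. lra. }
  lra.
Qed.

Theorem mainTheorem1
  (lam : R) (B : R -> R) (b : R)
  (Hlam : 0 < lam)
  (* B is a continuous distribution function of a nonnegative service time *)
  (HBcont : forall x, continuous B x)
  (HBmono : forall x y, x <= y -> B x <= B y)
  (HBneg : forall x, x < 0 -> B x = 0)
  (HBlim : is_lim B p_infty 1)
  (* b = int_0^oo (1 - B x) dx < oo *)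
  (Hb : is_RInt_gen (fun x => 1 - B x) (at_point 0) (Rbar_locally p_infty) b) :
  let rho := lam * b in
  forall t : R, 0 <= t ->
    is_RInt_gen (fun x => 1 - B x) (at_point t) (Rbar_locally p_infty)
      ((rho - rho_t lam B t) / lam) /\
    (forall k : nat,
      Rabs (MGinf_Pk lam B t k - poisson_pmf rho k)
        <= C_rho rho * (rho - rho_t lam B t)).
Proof.
  intros rho t Ht.
  set (f := fun x => 1 - B x).
  assert (HB0 : forall x, 0 <= B x).
  { intros x. destruct (Rlt_le_dec x 0). rewrite HBneg; lra.
    rewrite <- (HBneg (-1)) by lra. apply HBmono; lra. }
  assert (HB1 : forall x, B x <= 1).
  { intros x. destruct (Rle_lt_dec (B x) 1) as [|Hgt]; auto.
    exfalso. apply is_lim_spec in HBlim.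
    destruct (HBlim (mkposreal _ (proj2 (Rlt_0_minus _ _) Hgt))) as [M HM].
    set (y := Rmax x M + 1).
    assert (Hy : M < y) by (unfold y; pose proof (Rmax_r x M); lra).
    specialize (HM y Hy). simpl in HM.
    assert (B x <= B y) by (apply HBmono; unfold y; pose proof (Rmax_l x M); lra).
    apply Rabs_def2 in HM. lra. }
  assert (Hf0 : forall x, 0 <= f x) by (intros; unfold f; specialize (HB1 x); lra).
  assert (Hcf : forall x, continuous f x).
  { intros x. unfold f. apply (continuous_minus (fun _ => 1) B). apply continuous_const. apply HBcont. }
  assert (HI : is_RInt f 0 t (RInt f 0 t)).
  { apply (RInt_correct (V := R_CompleteNormedModule)), ex_RInt_continuous. intros; apply Hcf. }
  set (I := RInt f 0 t) in *.
  assert (Htail : is_RInt_gen f (at_point t) (Rbar_locally p_infty) (b - I)).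
  { assert (H1 : is_RInt_gen f (at_point t) (at_point 0) (- I)).
    { apply is_RInt_gen_at_point. apply (is_RInt_swap (V := R_NormedModule)). exact HI. }
    pose proof (is_RInt_gen_Chasles (V := R_NormedModule) (Fa := at_point t) (Fc := Rbar_locally p_infty) f 0 (- I) b H1 Hb) as H2.
    replace (b - I) with (- I + b) by ring. exact H2. }
  assert (Hrt : rho_t lam B t = lam * I) by reflexivity.
  assert (Heq : (rho - rho_t lam B t) / lam = b - I).
  { rewrite Hrt. unfold rho. field. lra. }
  assert (HIpos : 0 <= I).
  { apply RInt_ge_0; auto. eexists; exact HI. }
  assert (Htpos : 0 <= b - I).
  { assert (Hn := RInt_gen_norm (V := R_CompleteNormedModule) (Fa := at_point t) (Fb := Rbar_locally p_infty) f f (b - I) (b - I)).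
    eapply Rle_trans; [apply Rabs_pos|]. apply Hn; auto.
    - apply Filter_prod with (fun x => x = t) (fun y => t < y).
      reflexivity. exists t. auto. intros x y -> Hy; simpl; lra.
    - apply Filter_prod with (fun x => x = t) (fun y => t < y).
      reflexivity. exists t. auto. intros x y _ _ z _. simpl. unfold norm; simpl.
      rewrite Rabs_pos_eq; auto. lra. }
  split.
  - rewrite Heq. exact Htail.
  - intros k. unfold MGinf_Pk.
    assert (Hd : 0 <= rho - rho_t lam B t).
    { rewrite Hrt. unfold rho. rewrite <- Rmult_minus_distr_l. apply Rmult_le_pos; lra. }
    assert (Hrho : 0 <= rho) by (rewrite Hrt in Hd; pose proof (Rmult_le_pos lam I); lra).
    eapply Rle_trans. apply pmf_lip. rewrite Hrt; apply Rmult_le_pos; lra. lra.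
    pose proof (C_ge1 rho Hrho).
    rewrite <- (Rmult_1_l (rho - rho_t lam B t)) at 1.
    apply Rmult_le_compat_r; lra.
Qed.
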